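(* Let $(K,\delta)$ be a differential field and let $L_1,\ldots,L_k$ be nonzero elements of $K[\partial;\delta]$ of orders $r_1,\ldots,r_k$. Let $n\ge \operatorname{ord}(\mathrm{LCLM}(L_1,\ldots,L_k))$, and let $M_n$ be the block matrix with $k+1$ block rows and $k$ block columns whose $i$-th block row ($1\le i\le k$) has $S_n(L_i)$ in block column $i$ and zeros elsewhere, and whose last block row is $(S_n(-1),S_n(-1),\ldots,S_n(-1))$. Then: (i) If $L$ is a common left multiple of $L_1,\ldots,L_k$ with $\operatorname{ord}(L)\le n$ and $L=Q_1L_1=\cdots=Q_kL_k$, then the vector $(\phi_{n-r_1}(Q_1),\ldots,\phi_{n-r_k}(Q_k),\phi_n(L))$ belongs to the left kernel of $M_n$. (ii) If $(u_1,\ldots,u_k,u)$ is a nonzero vector in the left kernel of $M_n$, with $u_i\in K^{n+1-r_i}$ for $i=1,\ldots,k$ and $u\in K^{n+1}$, then $u$ is nonzero and $\phi_n^{-1}(u)$ is a common left multiple of $L_1,\ldots,L_k$ with respective left cofactors $\phi_{n-r_1}^{-1}(u_1),\ldots,\phi_{n-r_k}^{-1}(u_k)$, i.e. $\phi_n^{-1}(u)=\phi_{n-r_i}^{-1}(u_i)L_i$ for all $i$. (iii) If $\rho$ is the rank of $M_n$, then $\operatorname{ord}(\mathrm{LCLM}(L_1,\ldots,L_k))=\rho+\sum_{i=1}^k r_i-k(n+1)$.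
   Context: $(K,\delta)$ is a field with an additive map $\delta$ satisfying $\delta(ab)=a\delta(b)+\delta(a)b$. $K[\partial;\delta]$ is the ring of linear differential operators $\sum a_i\partial^i$, $a_i\in K$, with $\partial a=a\partial+\delta(a)$; the order of a nonzero operator is its degree in $\partial$. A common left multiple of nonzero $L_1,\ldots,L_k$ is an $L$ with $L=Q_1L_1=\cdots=Q_kL_k$ for some $Q_i\in K[\partial;\delta]$; an LCLM is a nonzero common left multiple of least order. $K[\partial;\delta]_{\le n}$ denotes operators of order at most $n$, and $\phi_n:K[\partial;\delta]_{\le n}\to K^{n+1}$ is the $K$-linear bijection $\sum_{i=0}^n a_i\partial^i\mapsto(a_n,a_{n-1},\ldots,a_0)$. For a nonzero $P$ of order $m$ and $n\ge m$, $S_n(P)$ is the $(n-m+1)\times(n+1)$ matrix whose rows are $\phi_n(\partial^{n-m}P),\phi_n(\partial^{n-m-1}P),\ldots,\phi_n(P)$ in this order (so $S_n(-1)$ is minus the identity of size $n+1$). Vectors are row vectors; the left kernel of a matrix $M$ is $\{v: vM=0\}$. *)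

(* Defs.v *)
From HB Require Import structures.
From mathcomp Require Import all_boot all_order all_algebra.
Set Implicit Arguments. Unset Strict Implicit. Unset Printing Implicit Defensive.
Import GRing.Theory.
Local Open Scope ring_scope.

(* Linear differential operators sum_i a_i d^i over a field K with a
   derivation delta are represented by their coefficient polynomials
   p : {poly K}, where p`_i is the coefficient a_i of d^i.  The ring
   structure of {poly K} is NOT used for operators; the (non-commutative)
   Ore product is [omul delta] below. *)

Section Ore.
Variables (K : fieldType) (delta : K -> K).

(* left multiplication by d : d * (sum b_j d^j) = sum (b_j d^(j+1) + delta(b_j) d^j) *)
Definition dmul1 (Q : {poly K}) : {poly K} := 'X * Q + map_poly delta Q.

Definition dpow (i : nat) (Q : {poly K}) : {poly K} := iter i dmul1 Q.

Definition omul (P Q : {poly K}) : {poly K} :=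
  \sum_(i < size P) P`_i *: dpow i Q.

Definition ord (P : {poly K}) : nat := (size P).-1.

Definition is_clm (k : nat) (Ls : 'I_k -> {poly K}) (L : {poly K}) : Prop :=
  exists Q : 'I_k -> {poly K}, forall i, L = omul (Q i) (Ls i).

Definition is_lclm (k : nat) (Ls : 'I_k -> {poly K}) (L : {poly K}) : Prop :=
  [/\ L != 0, is_clm Ls L &
      forall L', L' != 0 -> is_clm Ls L' -> (ord L <= ord L')%N].

Definition phi (n : nat) (P : {poly K}) : 'rV[K]_(n.+1) :=
  \row_(j < n.+1) P`_(n - j).

Definition phi_inv (n : nat) (u : 'rV[K]_(n.+1)) : {poly K} :=
  \poly_(i < n.+1) u 0 (inord (n - i)).

Definition Smx (n : nat) (P : {poly K}) : 'M[K]_((n - ord P).+1, n.+1) :=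
  \matrix_(i < (n - ord P).+1, j < n.+1) (phi n (dpow (n - ord P - i) P)) 0 j.

Lemma Smx_m1_rows (n : nat) : (n - ord (-1 : {poly K})).+1 = n.+1.
Proof. by rewrite /ord size_polyN size_poly1 subn0. Qed.

Definition Mn (n k : nat) (Ls : 'I_k -> {poly K}) :
  'M[K]_(\sum_(i < k) (n - ord (Ls i)).+1 + n.+1,
        \sum_(j < k) n.+1) :=
  col_mx
    (\mxblock_(i < k, j < k)
       (\matrix_(a < (n - ord (Ls i)).+1, b < n.+1)
          (if i == j then Smx n (Ls i) a b else 0)))
    (castmx (Smx_m1_rows n, erefl) (\mxrow_(j < k) Smx n (-1))).

End Ore.

(* Main.v *)
Set Warnings "-notation-overridden,-ambiguous-paths".
Require Import Defs.
From HB Require Import structures.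
From mathcomp Require Import all_boot all_order all_algebra.
From mathcomp Require Import zify.
Import GRing.Theory.
Local Open Scope ring_scope.

Section Ore2.
Variables (K : fieldType) (delta : K -> K).
Hypothesis delta_add : forall a b : K, delta (a + b) = delta a + delta b.
Hypothesis delta_leib : forall a b : K, delta (a * b) = a * delta b + delta a * b.

Lemma delta0 : delta 0 = 0.
Proof. have h := delta_add 0 0; rewrite addr0 in h; apply: (addrI (delta 0)); by rewrite -h addr0. Qed.

Lemma deltaN a : delta (- a) = - delta a.
Proof. by apply/eqP; rewrite -addr_eq0 -delta_add addNr delta0. Qed.

Lemma delta1 : delta 1 = 0.
Proof.
have := delta_leib 1 1; rewrite !mul1r mulr1 => h.
by apply: (addrI (delta 1)); rewrite -h addr0.
Qed.

Lemma coef_dmul1 Q i : (dmul1 delta Q)`_i = (if i == 0%N then 0 else Q`_i.-1) + delta Q`_i.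
Proof. by rewrite /dmul1 coefD coefXM coef_map_id0 // delta0. Qed.

Lemma dmul1D : {morph dmul1 delta : x y / x + y}.
Proof.
move=> x y; apply/polyP => i; rewrite coefD !coef_dmul1 !coefD delta_add.
by case: (i == 0%N); [rewrite !add0r | rewrite addrACA].
Qed.

Lemma dmul10 : dmul1 delta 0 = 0.
Proof. by apply/polyP => i; rewrite coef_dmul1 !coef0 delta0 addr0; case: ifP. Qed.

Lemma dmul1Z c Q : dmul1 delta (c *: Q) = c *: dmul1 delta Q + delta c *: Q.
Proof.
apply/polyP => i; rewrite coef_dmul1 [RHS]coefD !coefZ coef_dmul1 delta_leib mulrDr.
by case: ifP => _; rewrite ?mulr0 ?add0r // addrA.
Qed.

Lemma dpowS i Q : dpow delta i.+1 Q = dmul1 delta (dpow delta i Q).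
Proof. by rewrite /dpow iterS. Qed.

Lemma dpowD i : {morph dpow delta i : x y / x + y}.
Proof. elim: i => [//|i IH] x y; by rewrite !dpowS IH dmul1D. Qed.

Lemma dpow0 i : dpow delta i 0 = 0.
Proof. by elim: i => [//|i IH]; rewrite dpowS IH dmul10. Qed.

Lemma dpow_sum i (I : Type) (r : seq I) (F : I -> {poly K}) :
  dpow delta i (\sum_(j <- r) F j) = \sum_(j <- r) dpow delta i (F j).
Proof. exact: (big_morph _ (dpowD i) (dpow0 i)). Qed.

Lemma dmul1_sum (I : Type) (r : seq I) (F : I -> {poly K}) :
  dmul1 delta (\sum_(j <- r) F j) = \sum_(j <- r) dmul1 delta (F j).
Proof. exact: (big_morph _ dmul1D dmul10). Qed.

Lemma size_eq_lem (p : {poly K}) n : (size p <= n.+1)%N -> p`_n != 0 -> size p = n.+1.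
Proof.
move=> h1 h2; apply/eqP; rewrite eqn_leq h1 /=; rewrite ltnNge; apply/negP => /leq_sizeP h.
by move: h2; rewrite h // eqxx.
Qed.

Lemma size_dmul1 Q : Q != 0 -> size (dmul1 delta Q) = (size Q).+1 /\ lead_coef (dmul1 delta Q) = lead_coef Q.
Proof.
move=> nz.
have hc : (dmul1 delta Q)`_(size Q) = lead_coef Q.
  rewrite coef_dmul1 lead_coefE.
  have -> : Q`_(size Q) = 0 by apply: nth_default.
  rewrite delta0 addr0; case: ifP => // /eqP h.
  by move: nz; rewrite -size_poly_eq0 h.
have hs : size (dmul1 delta Q) = (size Q).+1.
  apply: size_eq_lem; last by rewrite hc lead_coef_eq0.
  apply/leq_sizeP => j hj; rewrite coef_dmul1.
  have -> : Q`_j = 0 by apply: nth_default; apply: ltnW.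
  rewrite delta0 addr0; case: ifP => // _; apply: nth_default; case: j hj => //.
by split => //; rewrite lead_coefE hs.
Qed.

Lemma size_dpow i Q : Q != 0 -> size (dpow delta i Q) = (size Q + i)%N /\ lead_coef (dpow delta i Q) = lead_coef Q.
Proof.
move=> nz; elim: i => [|i [IH1 IH2]]; first by rewrite addn0.
have nz' : dpow delta i Q != 0 by rewrite -size_poly_eq0 IH1 addn_eq0 size_poly_eq0 (negPf nz).
by rewrite dpowS; have [-> ->] := size_dmul1 _ nz'; rewrite IH1 IH2 addnS.
Qed.

Lemma size_dpow_leq i Q : (size (dpow delta i Q) <= size Q + i)%N.
Proof.
have [->|nz] := eqVneq Q 0; first by rewrite dpow0 size_poly0.
by rewrite (size_dpow i _ nz).1.
Qed.


Lemma omulE (P X : {poly K}) : omul delta P X = \sum_(i < size P) P`_i *: dpow delta i X.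
Proof. by []. Qed.

Lemma omul_ext (P Q : {poly K}) N : (size P <= N)%N -> omul delta P Q = \sum_(i < N) P`_i *: dpow delta i Q.
Proof.
move=> h; rewrite omulE (big_ord_widen N (fun i => P`_i *: dpow delta i Q) h) big_mkcond.
apply: eq_bigr => i _; case: ifP => // /negbT; rewrite -leqNgt => hi.
by rewrite nth_default // scale0r.
Qed.

Lemma omul0l (Q : {poly K}) : omul delta 0 Q = 0.
Proof. by rewrite omulE size_poly0 big_ord0. Qed.

Lemma omul0r (P : {poly K}) : omul delta P 0 = 0.
Proof. by rewrite omulE big1 // => i _; rewrite dpow0 scaler0. Qed.

Lemma omulDl (P P' Q : {poly K}) : omul delta (P + P') Q = omul delta P Q + omul delta P' Q.
Proof.
set N := maxn (size P) (size P').
rewrite !(omul_ext _ _ N) ?size_polyD ?leq_maxl ?leq_maxr // -big_split.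
by apply: eq_bigr => i _; rewrite coefD scalerDl.
Qed.

Lemma omulZl c (P Q : {poly K}) : omul delta (c *: P) Q = c *: omul delta P Q.
Proof.
rewrite (omul_ext _ _ (size P)) ?size_scale_leq // omulE scaler_sumr.
by apply: eq_bigr => i _; rewrite coefZ scalerA.
Qed.

Lemma omulNl (P Q : {poly K}) : omul delta (- P) Q = - omul delta P Q.
Proof. by rewrite -scaleN1r omulZl scaleN1r. Qed.

Lemma omulBl (P P' Q : {poly K}) : omul delta (P - P') Q = omul delta P Q - omul delta P' Q.
Proof. by rewrite omulDl omulNl. Qed.

Lemma omul_suml (I : Type) (r : seq I) (F : I -> {poly K}) Q :
  omul delta (\sum_(j <- r) F j) Q = \sum_(j <- r) omul delta (F j) Q.
Proof. exact: (big_morph (fun P => omul delta P Q) (fun x y => omulDl x y Q) (omul0l Q)). Qed.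

Lemma omulXn d (Q : {poly K}) : omul delta 'X^d Q = dpow delta d Q.
Proof.
rewrite (omul_ext _ _ d.+1) ?size_polyXn // big_ord_recr /= big1 ?add0r.
  by rewrite coefXn eqxx scale1r.
by move=> i _; rewrite coefXn ltn_eqF // scale0r.
Qed.

Lemma size_dmul1_leq (Q : {poly K}) : (size (dmul1 delta Q) <= (size Q).+1)%N.
Proof. by have := size_dpow_leq 1 Q; rewrite addn1. Qed.

Lemma omul_dmul1 (Q R : {poly K}) : omul delta (dmul1 delta Q) R = dmul1 delta (omul delta Q R).
Proof.
rewrite (omul_ext _ _ (size Q).+1) ?size_dmul1_leq // omulE dmul1_sum.
under eq_bigr do rewrite coef_dmul1 scalerDl.
under [RHS]eq_bigr do rewrite dmul1Z.
rewrite !big_split /=; congr (_ + _).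
  rewrite big_ord_recl /= scale0r add0r; apply: eq_bigr => i _.
  by rewrite add0n.
rewrite big_ord_recr /= nth_default // delta0 scale0r addr0.
by apply: eq_bigr.
Qed.

Lemma omul_dpow i (Q R : {poly K}) : omul delta (dpow delta i Q) R = dpow delta i (omul delta Q R).
Proof. by elim: i => [//|i IH]; rewrite !dpowS omul_dmul1 IH. Qed.

Lemma omulA (P Q R : {poly K}) : omul delta (omul delta P Q) R = omul delta P (omul delta Q R).
Proof.
rewrite (omulE P (omul delta Q R)) (omulE P Q) omul_suml.
by apply: eq_bigr => i _; rewrite omulZl omul_dpow.
Qed.

Lemma size_omul (P Q : {poly K}) : P != 0 -> Q != 0 ->
  size (omul delta P Q) = ((size P).-1 + size Q)%N /\
  lead_coef (omul delta P Q) = lead_coef P * lead_coef Q.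
Proof.
move=> nP nQ.
have sP : size P = (size P).-1.+1 by rewrite prednK // size_poly_gt0.
set s := (size P).-1 in sP *.
have hl : lead_coef P = P`_s by rewrite lead_coefE.
have nl : P`_s != 0 by rewrite -hl lead_coef_eq0.
have [hd1 hd2] := size_dpow s _ nQ.
have ht : size (P`_s *: dpow delta s Q) = (size Q + s)%N by rewrite size_scale.
have hsum : (size (\sum_(i < s) P`_i *: dpow delta i Q)%R < size Q + s)%N.
  have hQ : (0 < size Q)%N by rewrite size_poly_gt0.
  apply: (@leq_ltn_trans (size Q + s).-1); last by rewrite prednK // addn_gt0 hQ.
  apply: (big_ind (fun p : {poly K} => (size p <= (size Q + s).-1)%N)).
  - by rewrite size_poly0.
  - by move=> x y hx hy; apply: (leq_trans (size_polyD _ _)); rewrite geq_max hx hy.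
  - move=> i _; apply: leq_trans (size_scale_leq _ _) _; apply: leq_trans (size_dpow_leq _ _) _.
    by have := ltn_ord i; lia.
rewrite omulE sP big_ord_recr /= addrC.
rewrite size_polyDl ?ht // lead_coefDl ?ht // lead_coefZ hd2 hl; split => //.
by rewrite addnC.
Qed.

Lemma size_omul_leq (P Q : {poly K}) : (size (omul delta P Q) <= (size P).-1 + size Q)%N.
Proof.
have [->|nP] := eqVneq P 0; first by rewrite omul0l size_poly0.
have [->|nQ] := eqVneq Q 0; first by rewrite omul0r size_poly0.
by rewrite (size_omul _ _ nP nQ).1.
Qed.

Lemma omul_eq0 (P Q : {poly K}) : Q != 0 -> omul delta P Q = 0 -> P = 0.
Proof.
move=> nQ h; apply/eqP; apply/negPn/negP => nP.
have := (size_omul _ _ nP nQ).1; rewrite h size_poly0 => /esym/eqP.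
by rewrite addn_eq0 size_poly_eq0 (negPf nQ) andbF.
Qed.

Lemma rdiv (L D : {poly K}) : D != 0 -> exists Q R, L = omul delta Q D + R /\ (size R < size D)%N.
Proof.
move=> nD.
have : forall m (L : {poly K}), (size L <= m)%N -> exists Q R, L = omul delta Q D + R /\ (size R < size D)%N; last first.
  by move=> h; apply: (h (size L)).
elim=> [|m IH] {}L hL.
  exists 0, L; rewrite omul0l add0r; split => //.
  by apply: leq_ltn_trans hL _; rewrite size_poly_gt0.
case: (ltnP (size L) (size D)) => h.
  by exists 0, L; rewrite omul0l add0r.
have hD : (0 < size D)%N by rewrite size_poly_gt0.
have nL : L != 0 by rewrite -size_poly_gt0; apply: leq_trans h.
set d := (size L - size D)%N.
set c := lead_coef L / lead_coef D.
set T := c *: dpow delta d D.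
have nc : c != 0 by rewrite /c mulf_neq0 ?invr_eq0 ?lead_coef_eq0.
have [hd1 hd2] := size_dpow d _ nD.
have hTs : size T = size L by rewrite size_scale // hd1 /d; lia.
have hTl : lead_coef T = lead_coef L.
  by rewrite lead_coefZ hd2 /c -mulrA mulVf ?mulr1 // lead_coef_eq0.
have hL' : (size (L - T)%R <= m)%N.
  have : (size (L - T)%R <= (size L).-1)%N; last by move=> h'; apply: leq_trans h' _; lia.
  apply/leq_sizeP => j hj; rewrite coefB.
  move: hj; rewrite leq_eqVlt => /orP [/eqP <-|hj].
    by rewrite -{2}hTs -!lead_coefE hTl subrr.
  rewrite !nth_default ?hTs ?subrr //; by move: hj; case: (size L).
have [Q' [R [e1 e2]]] := IH _ hL'.
exists (c *: 'X^d + Q'), R; split => //.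
by rewrite omulDl omulZl omulXn -addrA -e1 addrC subrK.
Qed.

Lemma phiE n (P : {poly K}) j : phi n P 0 j = P`_(n - j).
Proof. by rewrite mxE. Qed.

Lemma phi_inv_phi n (P : {poly K}) : (size P <= n.+1)%N -> phi_inv (phi n P) = P.
Proof.
move=> h; apply/polyP => j; rewrite coef_poly; case: ltnP => hj.
  have hj' : (j <= n)%N by rewrite -ltnS.
  by rewrite mxE inordK ?subKn // ltnS leq_subr.
by rewrite nth_default //; apply: leq_trans hj.
Qed.

Lemma phi_phi_inv n (u : 'rV[K]_n.+1) : phi n (phi_inv u) = u.
Proof.
apply/matrixP => i j; rewrite ord1 mxE coef_poly ifT ?ltnS ?leq_subr //.
have -> : inord (n - (n - j)) = j :> 'I_n.+1.
  by apply: val_inj; rewrite /= inordK subKn // -ltnS.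
by [].
Qed.

Lemma phi0 n : phi n (0 : {poly K}) = 0.
Proof. by apply/matrixP => i j; rewrite !mxE coef0. Qed.

Lemma phi_inj n (P Q : {poly K}) : (size P <= n.+1)%N -> (size Q <= n.+1)%N ->
  phi n P = phi n Q -> P = Q.
Proof. by move=> hP hQ e; rewrite -(phi_inv_phi _ _ hP) -(phi_inv_phi _ _ hQ) e. Qed.

Lemma phi_omul n (L Q : {poly K}) : (size Q <= (n - ord L).+1)%N ->
  phi (n - ord L) Q *m Smx delta n L = phi n (omul delta Q L).
Proof.
set m := (n - ord L)%N => hQ.
apply/matrixP => i j; rewrite ord1 !mxE (omul_ext _ _ m.+1) // coef_sum.
rewrite [RHS](reindex_inj rev_ord_inj) /=.
apply: eq_bigr => a _; rewrite !mxE coefZ /= subSS.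
by [].
Qed.

Lemma castmx_mulr m m' p q (e : m = m') (u : 'M[K]_(q, m')) (A : 'M[K]_(m, p)) :
  u *m castmx (e, erefl p) A = castmx (erefl q, esym e) u *m A.
Proof. by case: m' / e u => u; rewrite !castmx_id. Qed.

Lemma cast_neg_id n m' (e : n.+1 = m') (u : 'rV[K]_n.+1) (A : 'M[K]_(m', n.+1)) :
  (forall a b, A a b = - ((val a == val b)%:R)) -> castmx (erefl 1%N, e) u *m A = - u.
Proof.
case: m' / e A => A hA; rewrite castmx_id.
have -> : A = - 1%:M by apply/matrixP => a b; rewrite hA !mxE val_eqE.
by rewrite mulmxN mulmx1.
Qed.

Lemma ordm1 : ord (-1 : {poly K}) = 0%N.
Proof. by rewrite /ord size_polyN size_poly1. Qed.

Lemma dpow_m1 d : dpow delta d (-1) = - 'X^d.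
Proof.
elim: d => [|d IH]; first by rewrite expr0.
rewrite dpowS IH /dmul1.
have -> : map_poly delta (- 'X^d) = 0.
  apply/polyP => i; rewrite coef_map_id0 ?delta0 // coefN coefXn coef0.
  by case: (i == d); rewrite ?deltaN ?delta1 ?delta0 ?oppr0.
by rewrite addr0 mulrN exprS.
Qed.

Lemma Smx_m1E n a b : Smx delta n (-1) a b = - ((val a == val b)%:R).
Proof.
rewrite !mxE.
have -> : forall x, (n - ord (-1 : {poly K}) - x = n - x)%N by move=> x; rewrite ordm1 subn0.
rewrite dpow_m1 coefN coefXn.
have hb := ltn_ord b.
have ha : (a <= n)%N.
  by have := ltn_ord a; move: (val a); rewrite ordm1 subn0.
congr (- (_%:R)); case: eqP => h1; case: eqP => h2 //; exfalso; simpl in *; lia.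
Qed.

Lemma Mn_mul n k (Ls : 'I_k -> {poly K}) (us : forall i : 'I_k, 'rV[K]_((n - ord (Ls i)).+1))
  (u : 'rV[K]_n.+1) :
  row_mx (\mxrow_(i < k) us i) u *m Mn delta n Ls =
  \mxrow_(j < k) (us j *m Smx delta n (Ls j) - u).
Proof.
rewrite /Mn mul_row_col mul_mxrow_mxblock castmx_mulr mul_mxrow -mxrowD.
apply: eq_mxrow => j; congr (_ + _).
  rewrite (bigD1 j) //= big1 ?addr0.
    by congr (_ *m _); apply/matrixP => a b; rewrite mxE eqxx.
  move=> i /negPf hij.
  have -> : (\matrix_(a < (n - ord (Ls i)).+1, b < n.+1)
     (if i == j then Smx delta n (Ls i) a b else 0)) = 0.
    by apply/matrixP => a b; rewrite !mxE hij.
  by rewrite mulmx0.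
by apply: cast_neg_id => a b; apply: Smx_m1E.
Qed.

Lemma Mn_ker n k (Ls : 'I_k -> {poly K}) (us : forall i : 'I_k, 'rV[K]_((n - ord (Ls i)).+1))
  (u : 'rV[K]_n.+1) :
  row_mx (\mxrow_(i < k) us i) u *m Mn delta n Ls = 0 <->
  forall j, us j *m Smx delta n (Ls j) = u.
Proof.
rewrite Mn_mul; split.
  move=> h j; apply/eqP; rewrite -subr_eq0; apply/eqP.
  have := congr1 (fun M => @submxrow _ _ (fun _ => n.+1) 1%N M j) h.
  by rewrite mxrowK submxrow0.
move=> h; transitivity (\mxrow_(j < k) (0 : 'rV[K]_n.+1)); last exact: mxrow0.
by apply: eq_mxrow => j; rewrite h subrr.
Qed.

Lemma part1 n k (Ls : 'I_k -> {poly K}) (Ls_nz : forall i, Ls i != 0)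
  (L : {poly K}) (Q : 'I_k -> {poly K}) :
  (ord L <= n)%N -> (forall i, L = omul delta (Q i) (Ls i)) ->
  row_mx (\mxrow_(i < k) phi (n - ord (Ls i)) (Q i)) (phi n L) *m Mn delta n Ls = 0.
Proof.
move=> hL hQ; apply/Mn_ker => j; rewrite (hQ j) phi_omul //.
have [->|nz] := eqVneq (Q j) 0; first by rewrite size_poly0.
have [h1 _] := size_omul _ _ nz (Ls_nz j).
have h2 : (0 < size (Ls j))%N by rewrite size_poly_gt0.
have h3 : (0 < size (Q j))%N by rewrite size_poly_gt0.
move: hL; rewrite (hQ j) /ord h1; lia.
Qed.

Lemma part2 n k (Ls : 'I_k -> {poly K}) (Ls_nz : forall i, Ls i != 0)
  (hr : forall i, (ord (Ls i) <= n)%N)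
  (us : forall i : 'I_k, 'rV[K]_((n - ord (Ls i)).+1)) (u : 'rV[K]_n.+1) :
  row_mx (\mxrow_(i < k) us i) u *m Mn delta n Ls = 0 ->
  (forall i, phi_inv u = omul delta (phi_inv (us i)) (Ls i)) /\
  (u = 0 -> forall i, us i = 0).
Proof.
move/Mn_ker => h.
have e : forall i, phi_inv u = omul delta (phi_inv (us i)) (Ls i).
  move=> i; rewrite -(h i) -{1}(phi_phi_inv _ (us i)) phi_omul ?size_poly //.
  apply: phi_inv_phi; apply: leq_trans (size_omul_leq _ _) _.
  have := size_poly (n - ord (Ls i)).+1 (fun j => us i 0 (inord (n - ord (Ls i) - j))).
  rewrite -/(phi_inv (us i)).
  have h2 : (0 < size (Ls i))%N by rewrite size_poly_gt0.
  have := hr i; rewrite /ord; lia.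
split => // u0 i.
have hs : (size (omul delta (phi_inv (us i)) (Ls i)) <= n.+1)%N.
  rewrite -e; exact: size_poly.
have : omul delta (phi_inv (us i)) (Ls i) = 0.
  apply: (@phi_inj n) => //; first by rewrite size_poly0.
  by rewrite -e phi_phi_inv phi0 u0.
move/omul_eq0 => /(_ (Ls_nz i)) hq.
by rewrite -(phi_phi_inv _ (us i)) hq phi0.
Qed.

Lemma rank_Smx n (Lc : {poly K}) : Lc != 0 -> (ord Lc <= n)%N ->
  \rank (Smx delta n Lc) = (n - ord Lc).+1.
Proof.
move=> nz hn; apply/eqP; suff: row_free (Smx delta n Lc) by []. rewrite -kermx_eq0 -submx0; apply/row_subP => r.
set x := row r _.
have hx : x *m Smx delta n Lc = 0 by apply/sub_kermxP; exact: row_sub.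
have hQ : (size (phi_inv x) <= (n - ord Lc).+1)%N by apply: size_poly.
move: hx; rewrite -(phi_phi_inv _ x) phi_omul // => hx.
have : omul delta (phi_inv x) Lc = 0.
  apply: (@phi_inj n); last by rewrite hx phi0.
    apply: leq_trans (size_omul_leq _ _) _.
    have h2 : (0 < size Lc)%N by rewrite size_poly_gt0.
    move: hQ hn; rewrite /ord; lia.
  by rewrite size_poly0.
move/omul_eq0 => /(_ nz) ->; by rewrite phi0 sub0mx.
Qed.

Lemma part3 n k (Ls : 'I_k -> {poly K}) (Ls_nz : forall i, Ls i != 0)
  (Lc : {poly K}) (HLc : is_lclm delta Ls Lc) (Hn : (ord Lc <= n)%N) :
  \rank (Mn delta n Ls) = (\sum_(i < k) (n - ord (Ls i)).+1 + n.+1 - (n - ord Lc).+1)%N.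
Proof.
case: HLc => nzLc [P hP] hmin.
have hr : forall i, (ord (Ls i) <= n)%N.
  move=> i; have nP : P i != 0.
    by apply/eqP => e; move: nzLc; rewrite (hP i) e omul0l eqxx.
  have [h1 _] := size_omul _ _ nP (Ls_nz i).
  have h2 : (0 < size (P i))%N by rewrite size_poly_gt0.
  move: Hn; rewrite /ord (hP i) h1; lia.
set N := (\sum_(i < k) (n - ord (Ls i)).+1 + n.+1)%N.
set M := Mn delta n Ls.
set Kr := kermx M.
set Pr : 'M[K]_(N, n.+1) := col_mx 0 1%:M.
have hPr : forall v : 'rV[K]_N, v *m Pr = rsubmx v.
  by move=> v; rewrite -{1}(hsubmxK v) mul_row_col mulmx0 add0r mulmx1.
have dec : forall v : 'rV[K]_N, v = row_mx (\mxrow_(i < k) submxrow (lsubmx v) i) (rsubmx v).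
  by move=> v; rewrite submxrowK hsubmxK.
have key : forall v : 'rV[K]_N, v *m M = 0 ->
   (forall i, phi_inv (rsubmx v) = omul delta (phi_inv (submxrow (lsubmx v) i)) (Ls i)) /\
   (rsubmx v = 0 -> v = 0).
  move=> v hv.
  have hv' : row_mx (\mxrow_(i < k) submxrow (lsubmx v) i) (rsubmx v) *m M = 0 by rewrite -dec.
  have [h1 h2] := @part2 n k Ls Ls_nz hr _ _ hv'; split => // h0.
  have := h2 h0 => h3; rewrite -[v]hsubmxK h0.
  transitivity (row_mx (0 : 'rV[K]_(\sum_(i < k) (n - ord (Ls i)).+1)) (0 : 'rV[K]_n.+1)); last exact: row_mx0.
  congr row_mx; rewrite -(@submxrowK _ _ (fun i => (n - ord (Ls i)).+1) 1%N (lsubmx v)).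
  rewrite -(mxrow0 (q_ := fun i => (n - ord (Ls i)).+1)).
  by apply: eq_mxrow => i; rewrite h3.
have hA : \rank (Kr :&: kermx Pr)%MS = 0%N.
  apply/eqP; rewrite mxrank_eq0 -submx0; apply/row_subP => r.
  have := row_sub r (Kr :&: kermx Pr)%MS; rewrite sub_capmx => /andP [h1 h2].
  move/sub_kermxP: h1 => h1; move/sub_kermxP: h2; rewrite hPr => h2.
  by rewrite ((key _ h1).2 h2) sub0mx.
have hB : \rank Kr = \rank (Kr *m Pr).
  by have := mxrank_mul_ker Kr Pr; rewrite hA addn0.
have hC : (Kr *m Pr == Smx delta n Lc)%MS.
  apply/andP; split.
  - apply/row_subP => r; rewrite row_mul hPr.
    have hv : row r Kr *m M = 0 by apply/sub_kermxP; exact: row_sub.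
    have [hk _] := key _ hv.
    set u := rsubmx (row r Kr) in hk *.
    set L := phi_inv u.
    have [Q [R [e1 e2]]] := rdiv L Lc nzLc.
    have hR : R = 0.
      apply/eqP; apply/negPn/negP => nR.
      have : (ord Lc <= ord R)%N.
        apply: hmin => //.
        exists (fun i => phi_inv (submxrow (lsubmx (row r Kr)) i) - omul delta Q (P i)) => i.
        rewrite omulBl omulA -(hP i) -hk -/L.
        by rewrite {1}e1 addrC addKr.
      have : (0 < size R)%N by rewrite size_poly_gt0.
      move: e2; rewrite /ord; lia.
    rewrite hR addr0 in e1.
    have hQ : (size Q <= (n - ord Lc).+1)%N.
      have [->|nQ] := eqVneq Q 0; first by rewrite size_poly0.
      have [h1 _] := size_omul _ _ nQ nzLc.
      have : (size L <= n.+1)%N by apply: size_poly.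
      have : (0 < size Lc)%N by rewrite size_poly_gt0.
      have : (0 < size Q)%N by rewrite size_poly_gt0.
      rewrite e1 h1 /ord; lia.
    by rewrite -(phi_phi_inv _ u) -/L e1 -phi_omul // submxMl.
  - apply/row_subP => a.
    set d := (n - ord Lc - a)%N.
    have -> : row a (Smx delta n Lc) = phi n (dpow delta d Lc).
      by apply/matrixP => i j; rewrite !mxE.
    set L' := dpow delta d Lc.
    have hL' : (ord L' <= n)%N.
      have [h1 _] := size_dpow d _ nzLc.
      rewrite /L' /ord h1 /d; move: Hn; rewrite /ord.
      have := ltn_ord a; lia.
    have hcof : forall i, L' = omul delta (omul delta 'X^d (P i)) (Ls i).
      by move=> i; rewrite omulA -(hP i) omulXn.
    have hv := @part1 n k Ls Ls_nz _ _ hL' hcof.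
    have : (row_mx (\mxrow_(i < k) phi (n - ord (Ls i)) (omul delta 'X^d (P i))) (phi n L') <= Kr)%MS.
      by apply/sub_kermxP.
    move/(submxMr Pr); by rewrite hPr row_mxKr.
have hD := rank_Smx _ _ nzLc Hn.
have hE := mxrank_ker M.
have hF := rank_leq_row M.
move: hE; rewrite -/Kr hB (eqmx_rank hC) hD.
rewrite -/N; lia.
Qed.

End Ore2.

Theorem theorem3 (K : fieldType) (delta : K -> K)
  (delta_add : forall a b : K, delta (a + b) = delta a + delta b)
  (delta_leib : forall a b : K, delta (a * b) = a * delta b + delta a * b)
  (k : nat) (Ls : 'I_k -> {poly K}) (Ls_nz : forall i, Ls i != 0)
  (Lc : {poly K}) (HLc : is_lclm delta Ls Lc)
  (n : nat) (Hn : (ord Lc <= n)%N) :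
  (* (i) *)
  (forall (L : {poly K}) (Q : 'I_k -> {poly K}),
     (ord L <= n)%N -> (forall i, L = omul delta (Q i) (Ls i)) ->
     row_mx (\mxrow_(i < k) phi (n - ord (Ls i)) (Q i)) (phi n L)
       *m Mn delta n Ls = 0)
  /\
  (* (ii) *)
  (forall (us : forall i : 'I_k, 'rV[K]_((n - ord (Ls i)).+1)) (u : 'rV[K]_(n.+1)),
     row_mx (\mxrow_(i < k) us i) u *m Mn delta n Ls = 0 ->
     ((exists i, us i != 0) \/ u != 0) ->
     u != 0 /\
     forall i, phi_inv u = omul delta (phi_inv (us i)) (Ls i))
  /\
  (* (iii) *)
  ((ord Lc)%:Z = (\rank (Mn delta n Ls))%:Z + (\sum_(i < k) ord (Ls i))%:Z
                  - (k * n.+1)%:Z).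
Proof.
have hr : forall i, (ord (Ls i) <= n)%N.
  case: HLc => nzLc [P hP] _ i.
  have nP : P i != 0.
    by apply/eqP => e; move: nzLc; rewrite (hP i) e omul0l eqxx.
  have [h1 _] := size_omul K delta delta_add _ _ nP (Ls_nz i).
  have h2 : (0 < size (P i))%N by rewrite size_poly_gt0.
  move: Hn; rewrite /ord (hP i) h1; lia.
split; first by move=> L Q hL hQ; apply: (@part1 K delta delta_add delta_leib n k Ls Ls_nz _ _ hL hQ).
split.
  move=> us u hker hnz.
  have [h1 h2] := @part2 K delta delta_add delta_leib n k Ls Ls_nz hr _ _ hker.
  split => //; apply/eqP => u0.
  case: hnz => [[i /eqP []]|/eqP //]; exact: h2.
rewrite (@part3 K delta delta_add delta_leib n k Ls Ls_nz Lc HLc Hn).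
have hs : (\sum_(i < k) (n - ord (Ls i)).+1 + \sum_(i < k) ord (Ls i) = k * n.+1)%N.
  rewrite -big_split /=.
  rewrite (eq_bigr (fun _ => n.+1)); last by move=> i _; have := hr i; lia.
  by rewrite sum_nat_const card_ord.
have hsum : (n.+1 <= \sum_(i < k) (n - ord (Ls i)).+1 + n.+1)%N by apply: leq_addl.
move: hs hsum Hn.
set T := (\sum_(i < k) (n - ord (Ls i)).+1)%N.
set S := (\sum_(i < k) ord (Ls i))%N.
lia.
Qed.
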